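(* Let $V$ be a left vector space over a field $K$ (any dimension) with $\mathcal G\neq\emptyset$, and let $d\ge0$ be an integer. For $X,Y\in\mathcal G$ the following are equivalent: (i) $X$ and $Y$ are at distance $d$ in the Grassmann graph on $\mathcal G$; (ii) $\dim((X+Y)/X)=\dim((X+Y)/Y)=d$; (iii) $\dim(X/(X\cap Y))=\dim(Y/(X\cap Y))=d$.
   Context: Fields are not necessarily commutative (division rings). $\mathcal G$ denotes the set of all subspaces $X\le V$ such that $X$ is isomorphic to $V/X$. Two elements $X,Y\in\mathcal G$ are adjacent if $\dim((X+Y)/X)=\dim((X+Y)/Y)=1$. The Grassmann graph on $\mathcal G$ has vertex set $\mathcal G$ and edges the pairs of adjacent elements; distance means graph distance (infinite if no path exists). *)

(* Defs.v *)
From HB Require Import structures.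
From mathcomp Require Import all_boot all_order all_algebra.
Set Implicit Arguments. Unset Strict Implicit. Unset Printing Implicit Defensive.
Import GRing.Theory.
Local Open Scope ring_scope.

(* A division ring ("field", not necessarily commutative): every nonzero
   element is invertible (1 <> 0 is built into unitRingType). *)
Definition division_ring (K : unitRingType) : Prop :=
  forall x : K, x != 0 -> x \is a GRing.unit.

Section Grass.
Variables (K : unitRingType) (V : lmodType K).

Definition subspace (X : V -> Prop) : Prop :=
  [/\ X 0, (forall x y, X x -> X y -> X (x + y)) & (forall (c : K) x, X x -> X (c *: x))].

Definition ssum (X Y : V -> Prop) : V -> Prop :=
  fun v => exists x y, [/\ X x, Y y & v = x + y].

Definition scap (X Y : V -> Prop) : V -> Prop := fun v => X v /\ Y v.

Definition linear_map (f : V -> V) : Prop :=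
  (forall u v, f (u + v) = f u + f v) /\ (forall (c : K) v, f (c *: v) = c *: f v).

(* X is isomorphic to V/X, i.e. (first isomorphism theorem) there is a linear
   map V -> V with kernel X and image X. *)
Definition iso_quot (X : V -> Prop) : Prop :=
  exists f : V -> V, [/\ linear_map f,
    (forall v, f v = 0 <-> X v) & (forall x, X x <-> exists v, f v = x)].

Definition inG (X : V -> Prop) : Prop := subspace X /\ iso_quot X.

(* dim (W/U) = d for subspaces U <= W: there are w_1..w_d in W whose images
   in W/U form a basis of W/U. *)
Definition qdim (W U : V -> Prop) (d : nat) : Prop :=
  exists w : 'I_d -> V,
    [/\ (forall i, W (w i)),
        (forall c : 'I_d -> K, U (\sum_(i < d) c i *: w i) -> forall i, c i = 0)
      & (forall v, W v -> exists c : 'I_d -> K, U (v - \sum_(i < d) c i *: w i))].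

Definition adjacent (X Y : V -> Prop) : Prop :=
  qdim (ssum X Y) X 1 /\ qdim (ssum X Y) Y 1.

Definition walk (X Y : V -> Prop) (n : nat) : Prop :=
  exists p : nat -> (V -> Prop),
    [/\ p 0%N = X, p n = Y, (forall i, (i <= n)%N -> inG (p i))
      & (forall i, (i < n)%N -> adjacent (p i) (p i.+1))].

Definition gdist (X Y : V -> Prop) (d : nat) : Prop :=
  walk X Y d /\ forall n, (n < d)%N -> ~ walk X Y n.

End Grass.

(* Main.v *)
Require Import Defs.
From HB Require Import structures.
From mathcomp Require Import all_boot all_order all_algebra.
From mathcomp Require Import boolp classical_sets.
From Stdlib Require Import Classical ClassicalEpsilon FunctionalExtensionality PropExtensionality.
Set Implicit Arguments. Unset Strict Implicit. Unset Printing Implicit Defensive.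
Import GRing.Theory.
Local Open Scope ring_scope.


Section Lin.
Variables (K : unitRingType) (V : lmodType K).
Hypothesis hK : division_ring K.
Implicit Types (U W X Y A B C : V -> Prop).

Definition incl U W := forall v, U v -> W v.

Lemma sub0 U : subspace U -> U 0.
Proof. by case. Qed.
Lemma subD U x y : subspace U -> U x -> U y -> U (x + y).
Proof. by case=> _ H _; apply: H. Qed.
Lemma subZ U c x : subspace U -> U x -> U (c *: x).
Proof. by case=> _ _ H; apply: H. Qed.
Lemma subN U x : subspace U -> U x -> U (- x).
Proof. by move=> sU Ux; rewrite -scaleN1r; apply: subZ. Qed.
Lemma subB U x y : subspace U -> U x -> U y -> U (x - y).
Proof. by move=> sU Ux Uy; apply: subD => //; apply: subN. Qed.
Lemma subBr U x y : subspace U -> U (x - y) -> U y -> U x.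
Proof. by move=> sU H Uy; rewrite -(subrK y x); apply: subD. Qed.
Lemma sub_sum U n (c : 'I_n -> K) (w : 'I_n -> V) : subspace U ->
  (forall i, U (w i)) -> U (\sum_(i < n) c i *: w i).
Proof.
move=> sU Hw; elim/big_ind: _ => //; first exact: sub0.
  by move=> x y; apply: subD.
by move=> i _; apply: subZ.
Qed.

Lemma unitK (c : K) : c != 0 -> c^-1 * c = 1.
Proof. by move=> /hK; apply: mulVr. Qed.

Lemma scale_cancel U (c : K) x : subspace U -> c != 0 -> U (c *: x) -> U x.
Proof.
move=> sU nc H; have := subZ c^-1 sU H; by rewrite scalerA unitK // scale1r.
Qed.

Lemma qdim_ext A A' B B' n : (forall v, A v <-> A' v) -> (forall v, B v <-> B' v) ->
  qdim A B n -> qdim A' B' n.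
Proof.
move=> eA eB [w [H1 H2 H3]]; exists w; split.
- by move=> i; apply/eA.
- by move=> c /eB; apply: H2.
- by move=> v /eA /H3 [c Hc]; exists c; apply/eB.
Qed.

Lemma qdim_concat A B C a b : subspace A -> subspace B -> subspace C ->
  incl C B -> incl B A -> qdim A B a -> qdim B C b -> qdim A C (a + b).
Proof.
move=> sA sB sC CB BA [u [Au iu su]] [v [Bv iv sv]].
pose w (k : 'I_(a + b)) := match split k with inl i => u i | inr j => v j end.
have sumE (c : 'I_(a + b) -> K) : \sum_(k < a + b) c k *: w k =
    \sum_(i < a) c (lshift b i) *: u i + \sum_(j < b) c (rshift a j) *: v j.
  rewrite big_split_ord /=; congr (_ + _); apply: eq_bigr => i _; rewrite /w.
    by have := unsplitK (inl i : 'I_a + 'I_b) => /= ->.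
  by have := unsplitK (inr i : 'I_a + 'I_b) => /= ->.
exists w; split.
- by move=> k; rewrite /w; case: (split k) => [i|j]; [apply: Au | apply: BA; apply: Bv].
- move=> c; rewrite sumE => Hc.
  have Bv' : B (\sum_(j < b) c (rshift a j) *: v j) by apply: sub_sum.
  have Hl : forall i, c (lshift b i) = 0.
    apply: iu; rewrite -(addrK (\sum_(j < b) c (rshift a j) *: v j) (\sum_(i < a) _)).
    by apply: subB => //; apply: CB.
  have Hr : forall j, c (rshift a j) = 0.
    apply: iv; move: Hc; rewrite (eq_bigr (fun i => 0)); last by move=> i _; rewrite Hl scale0r.
    by rewrite big1_eq add0r.
  move=> k; rewrite -(splitK k); case: (split k) => [i|j] /=; [exact: Hl | exact: Hr].
- move=> x Ax; have [e He] := su x Ax; have [f Hf] := sv _ He.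
  exists (fun k => match split k with inl i => e i | inr j => f j end).
  rewrite sumE.
  have -> : \sum_(i < a) (match split (lshift b i) with inl i0 => e i0 | inr j => f j end) *: u i
      = \sum_(i < a) e i *: u i.
    by apply: eq_bigr => i _; have := unsplitK (inl i : 'I_a + 'I_b) => /= ->.
  have -> : \sum_(j < b) (match split (rshift a j) with inl i0 => e i0 | inr j => f j end) *: v j
      = \sum_(j < b) f j *: v j.
    by apply: eq_bigr => i _; have := unsplitK (inr i : 'I_a + 'I_b) => /= ->.
  by rewrite opprD addrA.
Qed.

Lemma zid2 (a b s1 s2 e : V) : (a - b) - (s1 - s2) = (a - (s1 + e)) - (b - (s2 + e)).
Proof.
rewrite !opprB !opprD -!addrA; congr (a + _).
by rewrite (addrCA s2) addKr [LHS]addrC -addrA addrCA.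
Qed.
Lemma zid1 (v s1 s2 a b : V) : v - (s1 - s2) = (v - (s1 + a)) - (b - (s2 + a)) + b.
Proof. by rewrite -(zid2 v b) opprB addrAC subrK. Qed.

Lemma zid3 (v p q : V) : v - q = (v - (p + q)) + p.
Proof. by rewrite opprD addrA addrAC subrK. Qed.

Lemma sum_lin m (c e : 'I_m -> K) (t : K) (g : 'I_m -> V) :
  \sum_(i < m) (c i - t * e i) *: g i = \sum_(i < m) c i *: g i - t *: \sum_(i < m) e i *: g i.
Proof. by rewrite scaler_sumr -sumrB; apply: eq_bigr => i _; rewrite scalerBl scalerA. Qed.

Definition addline U w0 : V -> Prop := fun v => exists u t, U u /\ v = u + t *: w0.

Lemma addline_sub U w0 : subspace U -> subspace (addline U w0).
Proof.
move=> sU; split.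
- by exists 0, 0; rewrite scale0r addr0; split => //; apply: sub0.
- move=> x y [u [t [Uu ->]]] [u' [t' [Uu' ->]]]; exists (u + u'), (t + t'); split.
    exact: subD.
  by rewrite scalerDl addrACA.
- move=> c x [u [t [Uu ->]]]; exists (c *: u), (c * t); split; first exact: subZ.
  by rewrite scalerDr scalerA.
Qed.

Lemma addline_incl U w0 : subspace U -> incl U (addline U w0).
Proof. by move=> sU v Uv; exists v, 0; rewrite scale0r addr0. Qed.

Lemma qdim_line U w0 : subspace U -> ~ U w0 -> qdim (addline U w0) U 1.
Proof.
move=> sU nU; exists (fun _ => w0); split.
- by move=> _; exists 0, 1; rewrite scale1r add0r; split => //; apply: sub0.
- move=> c; rewrite big_ord1 => Hc i; rewrite (ord1 i).
  by case: (eqVneq (c ord0) 0) => // nz; exfalso; apply: nU; apply: (scale_cancel sU nz).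
- move=> v [u [t [Uu ->]]]; exists (fun _ => t); by rewrite big_ord1 addrK.
Qed.

Lemma span_qdim m : forall W U (g : 'I_m -> V), subspace W -> subspace U -> incl U W ->
  (forall v, W v -> exists c : 'I_m -> K, U (v - \sum_(i < m) c i *: g i)) ->
  exists2 k, (k <= m)%N & qdim W U k.
Proof.
elim: m => [|m IH] W U g sW sU UW Hs.
  exists 0%N => //; exists (fun _ => 0); split.
  - by move=> _; apply: sub0.
  - by move=> c _ [].
  - move=> v Wv; have [c Hc] := Hs v Wv; exists c; by move: Hc; rewrite !big_ord0.
pose g' (i : 'I_m) := g (widen_ord (leqnSn m) i).
case: (classic (forall v, W v -> exists c : 'I_m -> K, U (v - \sum_(i < m) c i *: g' i))).
  move=> H; have [k km Hk] := IH W U g' sW sU UW H; exists k => //; exact: leqW.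
move=> Hno.
have [w0 [Ww0 Hw0]] : exists w0, W w0 /\ forall c : 'I_m -> K, ~ U (w0 - \sum_(i < m) c i *: g' i).
  apply: NNPP => H0; apply: Hno => v Wv; apply: NNPP => H1; apply: H0; exists v; split => // c Hc.
  by apply: H1; exists c.
have [C HC] := Hs w0 Ww0.
set p := C ord_max.
have pnz : p != 0.
  apply/negP => /eqP p0; apply: (Hw0 (fun i => C (widen_ord (leqnSn m) i))).
  by move: HC; rewrite big_ord_recr /= -/p p0 scale0r addr0.
have sU' := addline_sub w0 sU.
have U'W : incl (addline U w0) W.
  move=> v [u [t [Uu ->]]]; apply: subD => //; [exact: UW | exact: subZ].
have Hs' : forall v, W v -> exists c : 'I_m -> K, addline U w0 (v - \sum_(i < m) c i *: g' i).
  move=> v Wv; have [E HE] := Hs v Wv.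
  pose t := E ord_max * p^-1.
  exists (fun i => E (widen_ord (leqnSn m) i) - t * C (widen_ord (leqnSn m) i)).
  rewrite sum_lin.
  exists ((v - \sum_(i < m.+1) E i *: g i) - t *: (w0 - \sum_(i < m.+1) C i *: g i)), t.
  split; first by apply: subB => //; apply: subZ.
  rewrite !big_ord_recr /= -/p scalerBr scalerDr scalerA.
  have -> : t * p = E ord_max by rewrite /t mulrVK //; apply: hK.
  exact: zid1.
have [k km Hk] := IH W (addline U w0) g' sW sU' U'W Hs'.
exists (k + 1)%N; first by rewrite addn1.
apply: (qdim_concat sW sU' sU (addline_incl w0 sU) U'W Hk).
apply: qdim_line => // Uw0; apply: (Hw0 (fun _ => 0)).
by rewrite big1 ?subr0 // => i _; rewrite scale0r.
Qed.

Lemma indep_le U (sU : subspace U) b : forall a (v : 'I_a -> V) (w : 'I_b -> V)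
  (C : 'I_a -> 'I_b -> K),
  (forall i, U (v i - \sum_(j < b) C i j *: w j)) ->
  (forall c : 'I_a -> K, U (\sum_(i < a) c i *: v i) -> forall i, c i = 0) -> (a <= b)%N.
Proof.
elim: b => [|b IH] a v w C Hv Hind.
  case: a v C Hv Hind => // a v C Hv Hind.
  have : U (\sum_(i < a.+1) (fun _ => 1 : K) i *: v i).
    apply: sub_sum => // i; by move: (Hv i); rewrite big_ord0 subr0.
  by move=> /Hind /(_ ord0) /eqP; rewrite oner_eq0.
case: (classic (forall i, C i ord_max = 0)) => [H0|].
  apply: leqW; apply: (IH a v (fun j => w (widen_ord (leqnSn b) j))
     (fun i j => C i (widen_ord (leqnSn b) j))) => // i.
  by move: (Hv i); rewrite big_ord_recr /= H0 scale0r addr0.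
move=> /not_all_ex_not [i0 Hi0].
move: Hi0; case: a v C Hv Hind i0 => [|a] v C Hv Hind i0 Hi0; first by have := ltn_ord i0; rewrite ltn0.
set p := C i0 ord_max.
have pnz : p != 0 by apply/eqP.
pose t (i : 'I_a) := C (lift i0 i) ord_max * p^-1.
pose v' i := v (lift i0 i) - t i *: v i0.
pose w' (j : 'I_b) := w (widen_ord (leqnSn b) j).
pose C' i j := C (lift i0 i) (widen_ord (leqnSn b) j) - t i * C i0 (widen_ord (leqnSn b) j).
rewrite ltnS; apply: (IH a v' w' C').
- move=> i; rewrite /v' /C' sum_lin.
  have -> : (v (lift i0 i) - t i *: v i0) -
     (\sum_(j < b) C (lift i0 i) (widen_ord (leqnSn b) j) *: w' j -
      t i *: \sum_(j < b) C i0 (widen_ord (leqnSn b) j) *: w' j) =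
    (v (lift i0 i) - \sum_(j < b.+1) C (lift i0 i) j *: w j) -
      t i *: (v i0 - \sum_(j < b.+1) C i0 j *: w j).
    rewrite !big_ord_recr /= -/p scalerBr scalerDr scalerA.
    have -> : t i * p = C (lift i0 i) ord_max by rewrite /t mulrVK //; apply: hK.
    exact: zid2.
  by apply: subB => //; apply: subZ.
- move=> e He.
  pose E k := if unlift i0 k is Some i then e i else - \sum_(i < a) e i * t i.
  have HE : \sum_(k < a.+1) E k *: v k = \sum_(i < a) e i *: v' i.
    rewrite (bigD1_ord i0) //= /E unlift_none.
    under eq_bigr do rewrite liftK.
    rewrite /v'.
    under [in RHS]eq_bigr do rewrite scalerBr scalerA.
    by rewrite sumrB -scaler_suml scaleNr addrC.
  have HE0 := Hind E; rewrite HE in HE0; have {}HE0 := HE0 He.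
  by move=> i; have := HE0 (lift i0 i); rewrite /E liftK.
Qed.

Lemma qdim_uniq W U a b : subspace U -> qdim W U a -> qdim W U b -> a = b.
Proof.
move=> sU [u [Wu iu su]] [v [Wv iv sv]].
have le : forall a b (u : 'I_a -> V) (v : 'I_b -> V), (forall i, W (u i)) ->
    (forall c : 'I_a -> K, U (\sum_(i < a) c i *: u i) -> forall i, c i = 0) ->
    (forall x, W x -> exists c : 'I_b -> K, U (x - \sum_(i < b) c i *: v i)) -> (a <= b)%N.
  move=> a' b' u' v' Wu' iu' sv'.
  have H : forall i, exists c : 'I_b' -> K, U (u' i - \sum_(j < b') c j *: v' j).
    by move=> i; apply: sv'.
  pose C i := proj1_sig (constructive_indefinite_description _ (H i)).
  apply: (indep_le sU (C := C)); last exact: iu'.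
  move=> i; exact: (proj2_sig (constructive_indefinite_description _ (H i))).
by apply: anti_leq; rewrite (le _ _ u v) // (le _ _ v u).
Qed.

Lemma ssum_sub X Y : subspace X -> subspace Y -> subspace (ssum X Y).
Proof.
move=> sX sY; split.
- by exists 0, 0; rewrite addr0; split => //; apply: sub0.
- move=> a b [x [y [Xx Yy ->]]] [x' [y' [Xx' Yy' ->]]]; exists (x + x'), (y + y').
  by split; [apply: subD | apply: subD | rewrite addrACA].
- move=> c a [x [y [Xx Yy ->]]]; exists (c *: x), (c *: y).
  by split; [apply: subZ | apply: subZ | rewrite scalerDr].
Qed.

Lemma scap_sub X Y : subspace X -> subspace Y -> subspace (scap X Y).
Proof.
move=> sX sY; split.
- by split; apply: sub0.
- by move=> a b [Xa Ya] [Xb Yb]; split; apply: subD.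
- by move=> c a [Xa Ya]; split; apply: subZ.
Qed.

Lemma ssum_l X Y : subspace Y -> incl X (ssum X Y).
Proof. by move=> sY x Xx; exists x, 0; rewrite addr0; split => //; apply: sub0. Qed.
Lemma ssum_r X Y : subspace X -> incl Y (ssum X Y).
Proof. by move=> sX y Yy; exists 0, y; rewrite add0r; split => //; apply: sub0. Qed.

Lemma qdim0 A B : incl A B -> qdim A B 0.
Proof.
move=> AB; exists (fun _ => 0); split.
- by case.
- by move=> c _ [].
- by move=> v Av; exists (fun _ => 0); rewrite big_ord0 subr0; apply: AB.
Qed.

Lemma qdim0_incl A B : qdim A B 0 -> incl A B.
Proof. by move=> [w [_ _ H]] v /H [c]; rewrite big_ord0 subr0. Qed.

Lemma qdim_shift A B T S n : subspace S -> subspace T -> subspace B -> incl B T -> incl T S ->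
  (forall s, S s -> exists a t, [/\ A a, T t & s = a + t]) ->
  qdim A B n -> exists2 k, (k <= n)%N & qdim S T k.
Proof.
move=> sS sT sB BT TS HS [g [Ag ig sg]].
apply: (span_qdim (g := g)) => // s Ss.
have [a [t [Aa Tt ->]]] := HS s Ss.
have [c Hc] := sg a Aa; exists c.
by rewrite addrAC; apply: subD => //; apply: BT.
Qed.

Lemma ii_iii X Y d : subspace X -> subspace Y ->
  (qdim (ssum X Y) X d <-> qdim Y (scap X Y) d).
Proof.
move=> sX sY; split.
- move=> [w [Sw iw sw]].
  pose P i := sval (constructive_indefinite_description _ (Sw i)).
  have HP i : exists y, [/\ X (P i), Y y & w i = P i + y].
    exact: (svalP (constructive_indefinite_description _ (Sw i))).
  pose Q i := sval (constructive_indefinite_description _ (HP i)).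
  have HQ i : [/\ X (P i), Y (Q i) & w i = P i + Q i].
    exact: (svalP (constructive_indefinite_description _ (HP i))).
  have sumE (c : 'I_d -> K) : \sum_(i < d) c i *: w i =
      \sum_(i < d) c i *: P i + \sum_(i < d) c i *: Q i.
    rewrite -big_split /=; apply: eq_bigr => i _; by case: (HQ i) => _ _ ->; rewrite scalerDr.
  have XP c : X (\sum_(i < d) c i *: P i) by apply: sub_sum => // i; case: (HQ i).
  exists Q; split.
  + by move=> i; case: (HQ i).
  + move=> c [HX HY]; apply: iw; rewrite sumE; exact: subD.
  + move=> v Yv; have [c Hc] := sw v (ssum_r sX Yv); exists c; split.
      rewrite (zid3 v (\sum_(i < d) c i *: P i)) -sumE; exact: subD.
    by apply: subB => //; apply: sub_sum => // i; case: (HQ i).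
- move=> [w [Yw iw sw]]; exists w; split.
  + by move=> i; apply: ssum_r.
  + move=> c Hc; apply: iw; split => //; apply: sub_sum => //.
  + move=> v [x [y [Xx Yy ->]]]; have [c [Hc1 Hc2]] := sw y Yy; exists c.
    by rewrite -addrA; apply: subD.
Qed.

Definition qrel X Y k := qdim (ssum X Y) X k /\ qdim (ssum X Y) Y k.

Lemma rel_step X W Y k : subspace X -> subspace W -> subspace Y ->
  qrel X W k -> adjacent W Y -> exists2 k', (k' <= k.+1)%N & qrel X Y k'.
Proof.
move=> sX sW sY [XW1 XW2] [WY1 WY2].
pose S := ssum (ssum X W) Y.
have sXW := ssum_sub sX sW; have sWY := ssum_sub sW sY; have sXY := ssum_sub sX sY.
have sS : subspace S by apply: ssum_sub.
have XWS : incl (ssum X W) S by apply: ssum_l.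
have WYS : incl (ssum W Y) S.
  move=> v [w [y [Ww Yy ->]]]; exists w, y; split => //; exact: ssum_r.
have XYS : incl (ssum X Y) S.
  move=> v [x [y [Xx Yy ->]]]; exists x, y; split => //; exact: ssum_l.
have [j1 j1le Hj1] : exists2 j1, (j1 <= 1)%N & qdim S (ssum X W) j1.
  apply: (qdim_shift (A := ssum W Y) (B := W)) => //; first exact: ssum_r.
  move=> s [a [y [XWa Yy ->]]]; exists y, a; split => //; [exact: ssum_r | exact: addrC].
have [j2 j2le Hj2] : exists2 j2, (j2 <= k)%N & qdim S (ssum W Y) j2.
  apply: (qdim_shift (A := ssum X W) (B := W)) => //; first exact: ssum_l.
  move=> s [a [y [XWa Yy ->]]]; exists a, y; split => //; exact: ssum_r.
have SX := qdim_concat sS sXW sX (ssum_l sW) XWS Hj1 XW1.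
have SW1 := qdim_concat sS sXW sW (ssum_r sX) XWS Hj1 XW2.
have SW2 := qdim_concat sS sWY sW (ssum_l sY) WYS Hj2 WY1.
have SY := qdim_concat sS sWY sY (ssum_r sW) WYS Hj2 WY2.
have EW := qdim_uniq sW SW1 SW2.
have [a _ Ha] : exists2 a, (a <= j1 + k)%N & qdim S (ssum X Y) a.
  apply: (qdim_shift (A := S) (B := X)) => //; first exact: ssum_l.
  by move=> s Ss; exists s, 0; split => //; [apply: sub0 | rewrite addr0].
have [b ble Hb] : exists2 b, (b <= j1 + k)%N & qdim (ssum X Y) X b.
  apply: (qdim_shift (A := S) (B := X)) => //; first exact: ssum_l.
  by move=> s Ss; exists s, 0; split; [apply: XYS | apply: sub0 | rewrite addr0].
have [b' _ Hb'] : exists2 b', (b' <= j2 + 1)%N & qdim (ssum X Y) Y b'.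
  apply: (qdim_shift (A := S) (B := Y)) => //; first exact: ssum_r.
  by move=> s Ss; exists s, 0; split; [apply: XYS | apply: sub0 | rewrite addr0].
have E1 := qdim_uniq sX (qdim_concat sS sXY sX (ssum_l sY) XYS Ha Hb) SX.
have E2 := qdim_uniq sY (qdim_concat sS sXY sY (ssum_r sX) XYS Ha Hb') SY.
have bb : b' = b by apply/eqP; rewrite -(eqn_add2l a) E1 E2 EW.
exists b; last by split => //; rewrite -bb.
by apply: (leq_trans ble); rewrite addnC -[k.+1]addn1 leq_add2l.
Qed.

Lemma walk_rel X Y n : walk X Y n -> exists2 k, (k <= n)%N & qrel X Y k.
Proof.
move=> [p [p0 pn inp adj]].
suff H : forall m, (m <= n)%N -> exists2 k, (k <= m)%N & qrel X (p m) k.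
  have [k kn Hk] := H n (leqnn n); exists k => //; by rewrite -pn.
elim => [|m IH] mn.
  exists 0%N => //; rewrite p0; have sX : subspace X by rewrite -p0; case: (inp 0%N isT).
  split; apply: qdim0; by move=> v [x [y [Xx Yy ->]]]; apply: subD.
have [k km Hk] := IH (ltnW mn).
have sX : subspace X by rewrite -p0; case: (inp 0%N isT).
have [k' k'le Hk'] := rel_step sX (proj1 (inp m (ltnW mn))) (proj1 (inp m.+1 mn)) Hk (adj m mn).
by exists k' => //; apply: (leq_trans k'le).
Qed.

End Lin.


Section Sep.
Variables (K : unitRingType) (V : lmodType K).
Hypothesis hK : division_ring K.
Implicit Types (U W X Y A B : V -> Prop).

Lemma sep U u : subspace U -> ~ U u -> exists lam : V -> K,
  [/\ (forall x y, lam (x + y) = lam x + lam y), (forall (c : K) x, lam (c *: x) = c * lam x),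
      (forall x, U x -> lam x = 0) & lam u = 1].
Proof.
move=> sU nUu.
pose P := fun M : set V => M = set0 \/ [/\ subspace M, incl U M & ~ M u].
have [A [PA Amax]] : exists A, P A /\ forall B, (A `<` B)%classic -> ~ P B.
  apply: Zorn_bigcup => F FP Ftot.
  case: (classic (exists M, F M /\ [/\ subspace M, incl U M & ~ M u])); last first.
    move=> Hno; left; apply: funext => v; apply: propext; split => // -[M FM Mv].
    case: (FP M FM) => [M0|HM]; first by rewrite M0 in Mv.
    by exfalso; apply: Hno; exists M.
  move=> [M0 [FM0 [sM0 UM0 nM0]]]; right.
  have good : forall M, F M -> forall v, M v -> [/\ subspace M, incl U M & ~ M u].
    by move=> M FM v Mv; case: (FP M FM) => // M0e; rewrite M0e in Mv.
  split.
  - split.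
    + by exists M0 => //; apply: sub0.
    + move=> x y [M1 FM1 M1x] [M2 FM2 M2y].
      case: (Ftot M1 M2 FM1 FM2) => H12.
        exists M2 => //; apply: subD => //; [by case: (good M2 FM2 y M2y) | exact: H12].
      exists M1 => //; apply: subD => //; [by case: (good M1 FM1 x M1x) | exact: H12].
    + move=> c x [M1 FM1 M1x]; exists M1 => //; apply: subZ => //.
      by case: (good M1 FM1 x M1x).
  - by move=> v Uv; exists M0 => //; apply: UM0.
  - by move=> [M FM Mu]; case: (good M FM u Mu).
have [sA UA nAu] : [/\ subspace A, incl U A & ~ A u].
  case: PA => // A0; exfalso; apply: (Amax U).
    rewrite A0; split; first by move=> v [].
    by move=> /(_ 0 (sub0 sU)).
  by right; split => //; move=> v.
have rep : forall v, exists t : K, A (v - t *: u).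
  move=> v; apply: NNPP => Hv.
  have nAv : ~ A v by move=> Av; apply: Hv; exists 0; rewrite scale0r subr0.
  apply: (Amax (addline A v)).
    split; first exact: addline_incl.
    move=> H; apply: nAv; apply: H; exists 0, 1; split; [exact: sub0 | by rewrite scale1r add0r].
  right; split; first exact: addline_sub.
    by move=> x Ux; apply: addline_incl => //; apply: UA.
  move=> [m [t [Am Hu]]].
  case: (eqVneq t 0) => [t0|tnz].
    by apply: nAu; rewrite Hu t0 scale0r addr0.
  apply: Hv; exists t^-1; rewrite Hu scalerDr scalerA unitK // scale1r.
  by rewrite opprD addrA addrAC subrr add0r; apply: subN => //; apply: subZ.
pose lam v := sval (constructive_indefinite_description _ (rep v)).
have lamP v : A (v - lam v *: u) := svalP (constructive_indefinite_description _ (rep v)).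
have lamU v t : A (v - t *: u) -> t = lam v.
  move=> H; case: (eqVneq t (lam v)) => // ne; exfalso; apply: nAu.
  have : A ((lam v - t) *: u).
    have -> : (lam v - t) *: u = (v - t *: u) - (v - lam v *: u).
      by rewrite scalerBl opprB [RHS]addrCA [X in _ = _ + X]addrAC subrr add0r.
    exact: subB.
  apply: scale_cancel => //; by rewrite subr_eq0 eq_sym.
exists lam; split.
- move=> x y; apply/esym/lamU.
  have -> : x + y - (lam x + lam y) *: u = (x - lam x *: u) + (y - lam y *: u).
    by rewrite scalerDl opprD addrACA.
  exact: subD.
- move=> c x; apply/esym/lamU.
  by rewrite -scalerA -scalerBr; apply: subZ.
- by move=> x Ux; apply/esym/lamU; rewrite scale0r subr0; apply: UA.
- by apply/esym/lamU; rewrite scale1r subrr; apply: sub0.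
Qed.

End Sep.


Section Step.
Variables (K : unitRingType) (V : lmodType K).
Hypothesis hK : division_ring K.
Implicit Types (U W X Y A B : V -> Prop).

Lemma widen_lift n (i : 'I_n) : widen_ord (leqnSn n) i = lift ord_max i.
Proof. apply: val_inj; exact: (esym (lift_max i)). Qed.

Lemma notin_last I n (w : 'I_n.+1 -> V) : subspace I ->
  (forall c : 'I_n.+1 -> K, I (\sum_(i < n.+1) c i *: w i) -> forall i, c i = 0) ->
  forall c : 'I_n -> K, ~ I (w ord_max - \sum_(i < n) c i *: w (widen_ord (leqnSn n) i)).
Proof.
move=> sI iw c Hc.
pose E (k : 'I_n.+1) := match unlift ord_max k with Some i => - c i | None => 1 end.
have : E ord_max = 0.
  apply: iw; rewrite big_ord_recr /= /E unlift_none scale1r addrC.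
  under eq_bigr do rewrite widen_lift liftK scaleNr.
  by rewrite sumrN; under eq_bigr do rewrite -widen_lift.
by rewrite /E unlift_none => /eqP; rewrite oner_eq0.
Qed.

Lemma zid4 (a s p q : V) : a + (s + (q - p)) - q = a + s - p.
Proof. by rewrite addrA (addrC q) addrA addrK. Qed.
Lemma zid5 (a s p q : V) : a + (q - p) + s - q = (a - p) + s.
Proof. by rewrite -!addrA; congr (_ + _); rewrite addrCA; congr (_ + _); rewrite addrCA subrr addr0. Qed.

Definition span_mod I n (g : 'I_n -> V) : V -> Prop :=
  fun v => exists c : 'I_n -> K, I (v - \sum_(i < n) c i *: g i).

Lemma span_mod_sub I n (g : 'I_n -> V) : subspace I -> subspace (span_mod I g).
Proof.
move=> sI; split.
- exists (fun _ => 0); rewrite big1 ?subr0 //; first exact: sub0.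
  by move=> i _; rewrite scale0r.
- move=> a b [c Hc] [c' Hc']; exists (fun i => c i + c' i).
  have -> : a + b - \sum_(i < n) (c i + c' i) *: g i =
     (a - \sum_(i < n) c i *: g i) + (b - \sum_(i < n) c' i *: g i).
    rewrite -addrACA -opprD -big_split /=; congr (_ - _); apply: eq_bigr => i _.
    by rewrite scalerDl.
  exact: subD.
- move=> k a [c Hc]; exists (fun i => k * c i).
  have -> : k *: a - \sum_(i < n) (k * c i) *: g i = k *: (a - \sum_(i < n) c i *: g i).
    by rewrite scalerBr scaler_sumr; congr (_ - _); apply: eq_bigr => i _; rewrite scalerA.
  exact: subZ.
Qed.

Lemma ssumC X Y v : ssum X Y v <-> ssum Y X v.
Proof. by split=> -[x [y [Xx Yy ->]]]; exists y, x; split => //; rewrite addrC. Qed.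
Lemma scapC X Y v : scap X Y v <-> scap Y X v.
Proof. by split=> -[]. Qed.

Lemma qdim_transport (s : V -> V) A B n : linear_map s -> (forall v, s (s v) = v) ->
  qdim A B n -> qdim (fun v => A (s v)) (fun v => B (s v)) n.
Proof.
move=> [sD sZ] ss [w [Aw iw sw]].
have s0 : s 0 = 0.
  by apply: (@addrI _ (s 0)); rewrite -sD !addr0.
have sN x : s (- x) = - s x by rewrite -scaleN1r sZ scaleN1r.
have sS m (c : 'I_m -> K) (g : 'I_m -> V) :
    s (\sum_(i < m) c i *: g i) = \sum_(i < m) c i *: s (g i).
  elim: m c g => [|m IH] c g; first by rewrite !big_ord0.
  by rewrite !big_ord_recr /= sD sZ IH.
exists (fun i => s (w i)); split.
- by move=> i; rewrite ss.
- by move=> c; rewrite sS; under eq_bigr do rewrite ss; apply: iw.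
- move=> v Av; have [c Hc] := sw _ Av; exists c.
  by rewrite sD sN sS; under eq_bigr do rewrite ss.
Qed.

Lemma step X Y d : inG X -> inG Y -> qrel X Y d.+1 ->
  exists Z, [/\ inG Z, adjacent X Z & qrel Z Y d].
Proof.
move=> [sX [f [[fD fZ] fker fim]]] [sY _] [R1 R2].
pose I := scap X Y.
have sI : subspace I by apply: scap_sub.
have [y [Yy iy sy]] : qdim Y I d.+1 by apply/ii_iii.
have [x [Xx ix sx]] : qdim X I d.+1.
  apply: (qdim_ext (A := X) (B := scap Y X)) => //; first by move=> v; apply: scapC.
  apply/ii_iii => //; apply: (qdim_ext (A := ssum X Y) (B := Y)) => // v; exact: ssumC.
pose x0 := x ord_max; pose y0 := y ord_max.
pose x' (i : 'I_d) := x (widen_ord (leqnSn d) i).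
pose X' := span_mod I x'.
have sX' : subspace X' := span_mod_sub x' sI.
have IX' : incl I X'.
  move=> v Iv; exists (fun _ => 0); rewrite big1 ?subr0 // => i _; exact: scale0r.
have X'X : incl X' X.
  move=> v [c Hc]; apply: (subBr sX (y := \sum_(i < d) c i *: x' i)); first by case: Hc.
  by apply: sub_sum => // i; apply: Xx.
have x0X' : ~ X' x0 by move=> [c Hc]; apply: (notin_last sI ix Hc).
have y0X : ~ X y0.
  move=> Xy0; apply: (notin_last sI iy (c := fun _ => 0)).
  by rewrite big1 ?subr0 => [|i _]; [split => //; apply: Yy | apply: scale0r].
have Xdec : forall v, X v -> exists t, X' (v - t *: x0).
  move=> v Xv; have [c Hc] := sx v Xv; exists (c ord_max), (fun i => c (widen_ord (leqnSn d) i)).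
  by move: Hc; rewrite big_ord_recr /= opprD addrA addrAC.
have [lam [lD lZ l0 l1]] : exists lam : V -> K,
  [/\ (forall a b, lam (a + b) = lam a + lam b), (forall (c : K) a, lam (c *: a) = c * lam a),
      (forall a, addline X' (x0 + y0) a -> lam a = 0) & lam x0 = 1].
  apply: sep => //; first exact: addline_sub.
  move=> [m [t [Xm Ht]]].
  case: (eqVneq t 0) => [t0|tnz].
    by apply: x0X'; rewrite Ht t0 scale0r addr0.
  apply: y0X; apply: (scale_cancel hK sX tnz).
  have -> : t *: y0 = x0 - m - t *: x0 by rewrite {1}Ht (addrC m) addrK scalerDr addrAC subrr add0r.
  apply: (subB sX); last by apply: (subZ _ sX); exact: Xx.
  by apply: (subB sX); [exact: Xx | exact: X'X].
have lN a : lam (- a) = - lam a by rewrite -scaleN1r lZ mulN1r.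
have lX' a : X' a -> lam a = 0.
  by move=> Ha; apply: l0; exists a, 0; rewrite scale0r addr0.
have ly0 : lam y0 = -1.
  have : lam (x0 + y0) = 0 by apply: l0; exists 0, 1; rewrite scale1r add0r; split => //; exact: sub0.
  by move=> H; apply/eqP; rewrite -addr_eq0 addrC -l1 -lD H.
pose dd := y0 - x0.
have ldd : lam dd = -1 - 1 by rewrite /dd lD lN ly0 l1.
pose sg v := v + lam v *: dd.
have sgD a b : sg (a + b) = sg a + sg b by rewrite /sg lD scalerDl addrACA.
have sgZ (c : K) a : sg (c *: a) = c *: sg a.
  by rewrite /sg lZ -scalerA -scalerDr.
have sgsg v : sg (sg v) = v.
  rewrite /sg lD lZ ldd -addrA -scalerDl.
  have -> : lam v + (lam v + lam v * (-1 - 1)) = 0.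
    by rewrite mulrBr mulrN1 mulr1 !addrA addrK subrr.
  by rewrite scale0r addr0.
have sgx0 : sg x0 = y0 by rewrite /sg l1 scale1r /dd addrC subrK.
have sgy0 : sg y0 = x0 by rewrite /sg ly0 scaleN1r /dd opprB addrC subrK.
have sgX' a : X' a -> sg a = a by move=> Ha; rewrite /sg lX' // scale0r addr0.
have sg0 : sg 0 = 0 by rewrite /sg -(scale0r 0) lZ mul0r !scale0r addr0.
have sgN a : sg (- a) = - sg a by rewrite -scaleN1r sgZ scaleN1r.
have sglin : linear_map sg by split.
pose Z := fun v => X (sg v).
have sZ : subspace Z.
  split; [by rewrite /Z sg0; apply: sub0 | by move=> a b Za Zb; rewrite /Z sgD; apply: subD
         | by move=> c a Za; rewrite /Z sgZ; apply: subZ].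
exists Z; split.
- split => //; exists (fun v => sg (f (sg v))); split.
  + split; [by move=> a b; rewrite sgD fD sgD | by move=> c a; rewrite sgZ fZ sgZ].
  + move=> v; rewrite /Z -fker; split => H; last by rewrite H sg0.
    by rewrite -(sgsg (f (sg v))) H sg0.
  + move=> z; rewrite /Z fim; split => -[w Hw].
      by exists (sg w); rewrite sgsg Hw sgsg.
    by exists (sg w); rewrite -Hw sgsg.
- split.
  + exists (fun _ => y0); split.
    * move=> _; exists 0, y0; rewrite add0r; split => //; [exact: sub0 | by rewrite /Z sgy0; apply: Xx].
    * move=> c; rewrite big_ord1 => Hc i; rewrite (ord1 i).
      case: (eqVneq (c ord0) 0) => // nz; exfalso; exact: y0X (scale_cancel hK sX nz Hc).
    * move=> v [a [z [Xa Zz ->]]]; exists (fun _ => lam (sg z)); rewrite big_ord1.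
      rewrite -{1}(sgsg z) {1}/sg /dd.
      have -> : a + (sg z + lam (sg z) *: (y0 - x0)) - lam (sg z) *: y0
           = a + sg z - lam (sg z) *: x0.
        by rewrite scalerBr zid4.
      apply: subB => //; [exact: subD | apply: subZ => //; exact: Xx].
  + exists (fun _ => x0); split.
    * move=> _; exists x0, 0; rewrite addr0; split => //; [exact: Xx | exact: sub0].
    * move=> c; rewrite big_ord1 /Z sgZ sgx0 => Hc i; rewrite (ord1 i).
      case: (eqVneq (c ord0) 0) => // nz; exfalso; exact: y0X (scale_cancel hK sX nz Hc).
    * move=> v [a [z [Xa Zz ->]]]; exists (fun _ => lam a); rewrite big_ord1.
      rewrite /Z sgD sgN sgZ sgx0 sgD {1}/sg /dd.
      have -> : a + lam a *: (y0 - x0) + sg z - lam a *: y0 = (a - lam a *: x0) + sg z.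
        by rewrite scalerBr zid5.
      apply: subD => //; apply: subB => //; apply: subZ => //; exact: Xx.
-
  pose S := ssum X Y.
  have sS : subspace S := ssum_sub sX sY.
  have x0S : S x0 := ssum_l sY (Xx ord_max).
  have y0S : S y0 := ssum_r sX (Yy ord_max).
  have sgS v : S v -> S (sg v).
    move=> Sv; rewrite /sg; apply: subD => //; apply: subZ => //; rewrite /dd; exact: subB.
  have SZ : incl Z S.
    move=> z Zz; rewrite -(sgsg z); apply: sgS; apply: (ssum_l sY); exact: Zz.
  have SZd : qdim S Z d.+1.
    apply: (qdim_ext (A := fun v => S (sg v)) (B := Z)); last exact: qdim_transport sglin sgsg R1.
      move=> v /=; split; last exact: sgS.
      by move=> H; rewrite -(sgsg v); apply: sgS.
    by move=> v.
  have sZY := ssum_sub sZ sY.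
  have ZYS : incl (ssum Z Y) S.
    move=> v [z [yy [Zz Yyy ->]]]; apply: subD => //; [exact: SZ | exact: (ssum_r sX Yyy)].
  have X'Z : incl X' Z by move=> v Hv; rewrite /Z sgX' //; apply: X'X.
  have H1 : qdim S (ssum Z Y) 1.
    exists (fun _ => x0); split.
    * by move=> _; exact: x0S.
    * move=> c; rewrite big_ord1 => Hc i; rewrite (ord1 i).
      case: (eqVneq (c ord0) 0) => // nz; exfalso.
      have [z [yy [Zz Yyy Hx]]] := scale_cancel hK sZY nz Hc.
      have [t Ht] := Xdec _ Zz.
      set m := sg z - t *: x0 in Ht.
      have zE : z = m + t *: y0.
        by rewrite -{1}(sgsg z) -{1}(subrK (t *: x0) (sg z)) sgD sgZ sgx0 sgX'.
      apply: x0X'.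
      have Im : I (x0 - m).
        split.
        - apply: (subB sX); [exact: Xx | exact: X'X].
        - have -> : x0 - m = t *: y0 + yy.
            by rewrite {1}Hx zE addrAC (addrC m) addrK.
          apply: (subD sY) => //; apply: (subZ _ sY); exact: Yy.
      by rewrite -(subrK m x0); apply: (subD sX') => //; exact: IX'.
    * move=> v [a [yy [Xa Yyy ->]]]; have [t Ht] := Xdec a Xa; exists (fun _ => t).
      rewrite big_ord1 addrAC; exists (a - t *: x0), yy; split => //; exact: X'Z.
  have [e _ He] : exists2 e, (e <= d.+1)%N & qdim (ssum Z Y) Z e.
    apply: (qdim_shift hK (A := S) (B := Z) (T := Z) (S := ssum Z Y) sZY sZ sZ (fun v H => H) (ssum_l sY)) => //.
    by move=> s' Ss; exists s', 0; split; [apply: ZYS | apply: sub0 | rewrite addr0].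
  have [e' _ He'] : exists2 e, (e <= d.+1)%N & qdim (ssum Z Y) Y e.
    apply: (qdim_shift hK (A := S) (B := Y) (T := Y) (S := ssum Z Y) sZY sY sY (fun v H => H) (ssum_r sZ)) => //.
    by move=> s' Ss; exists s', 0; split; [apply: ZYS | apply: sub0 | rewrite addr0].
  have E1 := qdim_uniq hK sZ (qdim_concat sS sZY sZ (ssum_l sY) ZYS H1 He) SZd.
  have E2 := qdim_uniq hK sY (qdim_concat sS sZY sY (ssum_r sZ) ZYS H1 He') R2.
  move: E1 E2; rewrite !add1n => -[E1] [E2].
  by split; [rewrite -E1 | rewrite -E2].
Qed.

End Step.


Section Final.
Variables (K : unitRingType) (V : lmodType K).
Hypothesis hK : division_ring K.
Implicit Types (U W X Y A B : V -> Prop).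

Lemma rel_walk d : forall X Y, inG X -> inG Y -> qrel X Y d -> walk X Y d.
Proof.
elim: d => [|d IH] X Y gX gY.
  move=> [H1 H2].
  have XY : X = Y.
    apply: functional_extensionality => v; apply: propositional_extensionality; split => Hv.
      apply: (qdim0_incl H2); apply: (ssum_l (proj1 gY)); exact: Hv.
    apply: (qdim0_incl H1); apply: (ssum_r (proj1 gX)); exact: Hv.
  exists (fun _ => X); split => //; by rewrite XY.
move=> HR; have [Z [gZ adj HZ]] := step hK gX gY HR.
have [p [p0 pn inp adjp]] := IH Z Y gZ gY HZ.
exists (fun i => if i is i'.+1 then p i' else X); split => //.
- by case => [|i] Hi //; apply: inp.
- case => [|i] Hi; first by rewrite p0.
  exact: adjp.
Qed.

End Final.

Theorem mainTheorem7 (K : unitRingType) (V : lmodType K) :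
  division_ring K ->
  (exists X : V -> Prop, inG X) ->
  forall (d : nat) (X Y : V -> Prop), inG X -> inG Y ->
    (gdist X Y d <-> (qdim (ssum X Y) X d /\ qdim (ssum X Y) Y d)) /\
    ((qdim (ssum X Y) X d /\ qdim (ssum X Y) Y d) <->
     (qdim X (scap X Y) d /\ qdim Y (scap X Y) d)).
Proof.
move=> hK _ d X Y gX gY.
have sX := proj1 gX; have sY := proj1 gY.
split.
- split.
  + move=> [Hw Hmin]; have [k kd Hk] := walk_rel hK Hw.
    have wk := rel_walk hK gX gY Hk.
    case: (ltngtP k d) => [kltd|dltk|<-] //.
      by exfalso; apply: (Hmin k kltd).
    by move: kd; rewrite leqNgt dltk.
  + move=> HR; split; first exact: (rel_walk hK gX gY HR).
    move=> n nd Hw; have [k kn Hk] := walk_rel hK Hw.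
    have := qdim_uniq hK sX (proj1 Hk) (proj1 HR) => kE.
    by move: (leq_ltn_trans kn nd); rewrite kE ltnn.
- split.
  + move=> [H1 H2]; split; last by apply/ii_iii.
    apply: (qdim_ext (A := X) (B := scap Y X)) => //; first by move=> v; apply: scapC.
    apply/ii_iii => //; apply: (qdim_ext (A := ssum X Y) (B := Y)) => // v; exact: ssumC.
  + move=> [H1 H2]; split; first by apply/ii_iii.
    have : qdim (ssum Y X) Y d.
      apply/ii_iii => //; apply: (qdim_ext (A := X) (B := scap X Y)) => // v; exact: scapC.
    apply: qdim_ext => // v; exact: ssumC.
Qed.
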